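(* Suppose that for every integer $\ell \ge 4$, $\pi(K^3_\ell) = 1-\left(\frac{2}{\ell-1}\right)^2$ (Turán's conjecture). Then the stability number of $K_4^3$ is infinite, i.e. $\xi(K_4^3)=\infty$.
   Context: $K^3_\ell$ is the complete $3$-graph on $\ell$ vertices. For a family $\mathcal{F}$ of $r$-graphs ($r$-uniform hypergraphs), $\mathcal{F}$-free means containing no member of $\mathcal{F}$ as a subgraph, $\mathrm{ex}(n,\mathcal{F})$ is the maximum number of edges of an $\mathcal{F}$-free $r$-graph on $n$ vertices, and $\pi(\mathcal{F})=\lim_{n\to\infty}\mathrm{ex}(n,\mathcal{F})/\binom{n}{r}$. $t$-stable: for integers $r\ge2$, $t\ge1$, a family $\mathcal{F}$ of $r$-graphs is $t$-stable if there exist $m_0$ and, for every $m\ge m_0$, $r$-graphs $\mathcal{H}^1_m,\dots,\mathcal{H}^t_m$ on $m$ vertices such that: for every $\delta>0$ there exist $\epsilon>0$ and $n_0$ such that for all $n\ge n_0$, every $\mathcal{F}$-free $r$-graph $\mathcal{H}$ on $n$ vertices with $|\mathcal{H}|>(1-\epsilon)\mathrm{ex}(n,\mathcal{F})$ can be transformed into (an isomorphic copy of) some $\mathcal{H}^i_n$ by adding and removing at most $\delta|\mathcal{H}|$ edges. The stability number $\xi(\mathcal{F})$ is the minimum $t$ such that $\mathcal{F}$ is $t$-stable, and $\xi(\mathcal{F})=\infty$ if no such $t$ exists. *)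

(* Defs.v *)
From mathcomp Require Import all_boot all_fingroup.
From Stdlib Require Import Reals.
Set Implicit Arguments. Unset Strict Implicit. Unset Printing Implicit Defensive.

Definition hgraph (n : nat) := {set {set 'I_n}}.

Definition uniform (r n : nat) (H : hgraph n) : bool :=
  [forall e in H, #|e| == r].

Definition contains (m n : nat) (F : hgraph m) (H : hgraph n) : bool :=
  [exists f : {ffun 'I_m -> 'I_n},
     injectiveb f && [forall e in F, (f @: e) \in H]].

Definition free (m n : nat) (F : hgraph m) (H : hgraph n) : bool :=
  ~~ contains F H.

Definition ex (r m : nat) (F : hgraph m) (n : nat) : nat :=
  \max_(H : hgraph n | uniform r H && free F H) #|H|.

Definition complete (r l : nat) : hgraph l := [set e : {set 'I_l} | #|e| == r].

Definition relabel (n : nat) (s : {perm 'I_n}) (G : hgraph n) : hgraph n :=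
  [set [set s x | x in e] | e : {set 'I_n} in G].

Definition edit_dist (n : nat) (H G : hgraph n) : nat :=
  #|(H :\: G) :|: (G :\: H)|.

Definition t_stable (r m : nat) (F : hgraph m) (t : nat) : Prop :=
  exists (m0 : nat) (Hs : forall k : nat, 'I_t -> hgraph k),
    (forall k i, (m0 <= k)%N -> uniform r (Hs k i)) /\
    forall delta : R, (delta > 0)%R ->
      exists (eps : R) (n0 : nat), (eps > 0)%R /\
        forall n : nat, (n0 <= n)%N -> (m0 <= n)%N ->
          forall H : hgraph n, uniform r H -> free F H ->
            (INR #|H| > (1 - eps) * INR (ex r F n))%R ->
            exists (i : 'I_t) (s : {perm 'I_n}),
              (INR (edit_dist H (relabel s (Hs n i))) <= delta * INR #|H|)%R.

Definition stability_number_infinite (r m : nat) (F : hgraph m) : Prop :=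
  forall t : nat, (1 <= t)%N -> ~ t_stable r F t.

Definition turan_density_is (r m : nat) (F : hgraph m) (c : R) : Prop :=
  Un_cv (fun n => (INR (ex r F n) / INR 'C(n, r))%R) c.

(* Main.v *)
Require Import Defs.
From mathcomp Require Import all_boot all_fingroup.
From mathcomp Require Import all_algebra zify ring.
Set Implicit Arguments. Unset Strict Implicit. Unset Printing Implicit Defensive.

Definition arcs : seq (nat * nat) :=
  [:: (0,1); (0,5); (1,2); (1,3); (2,0); (2,4); (3,0); (3,5); (4,1); (4,3); (5,2); (5,4)].
Definition D (a b : nat) : bool := (a, b) \in arcs.
Definition E (a b c : nat) : bool :=
  let narcs := (D a b + D b a + D a c + D c a + D b c + D c b)%N in
  [|| (D a b && D b c && D c a), (D b a && D c b && D a c) |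
      (narcs == 2) && ~~ [|| D a b && D a c, D b a && D b c | D c a && D c b]].
Definition i6 := iota 0 6.
Lemma E_check4 : all (fun a => all (fun b => all (fun c => all (fun d =>
   ~~ [&& E a b c, E a b d, E a c d & E b c d]) i6) i6) i6) i6.
Proof. vm_compute. reflexivity. Qed.

Lemma E12 a b c : E a b c = E b a c.
Proof. rewrite /E; case: (D a b); case: (D b a); case: (D a c); case: (D c a); case: (D b c); case: (D c b); by []. Qed.
Lemma E23 a b c : E a b c = E a c b.
Proof. rewrite /E; case: (D a b); case: (D b a); case: (D a c); case: (D c a); case: (D b c); case: (D c b); by []. Qed.

Definition Ef (a b c : nat) : bool := [&& a < 6, b < 6, c < 6 & E a b c].
Lemma Ef12 a b c : Ef a b c = Ef b a c.
Proof. by rewrite /Ef E12; case: (a < 6); case: (b < 6). Qed.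
Lemma Ef23 a b c : Ef a b c = Ef a c b.
Proof. by rewrite /Ef E23; case: (c < 6); case: (b < 6). Qed.

Lemma Ef_K4 p q r s : Ef p q r -> Ef p q s -> Ef p r s -> Ef q r s -> False.
Proof.
move=> /and4P[hp hq hr h1] /and4P[_ _ hs h2] /and4P[_ _ _ h3] /and4P[_ _ _ h4].
move/allP: E_check4 => /(_ p); rewrite mem_iota hp => /(_ isT) /allP /(_ q).
rewrite mem_iota hq => /(_ isT) /allP /(_ r); rewrite mem_iota hr => /(_ isT) /allP /(_ s).
by rewrite mem_iota hs h1 h2 h3 h4 => /(_ isT).
Qed.

Definition bl (x y v : nat) : nat := if v %% (x + y) < x then v %/ (x + y) else 3 + v %/ (x + y).

Definition Gc (n x y : nat) : hgraph n :=
  [set e : {set 'I_n} | [exists a : 'I_n, exists b : 'I_n, exists c : 'I_n,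
     (e == [set a; b; c]) && [&& a != b, a != c, b != c & Ef (bl x y a) (bl x y b) (bl x y c)]]].

Lemma set3E (T : finType) (a b c : T) : [set a; b; c] = a |: [set b; c].
Proof. by rewrite setUA. Qed.

Lemma card3 (T : finType) (a b c : T) : a != b -> a != c -> b != c -> #|[set a; b; c]| = 3.
Proof. move=> ab ac bc; by rewrite set3E cardsU1 cards2 in_set2 (negbTE ab) (negbTE ac) bc. Qed.

Lemma card3_dist (T : finType) (a b c : T) : #|[set a; b; c]| = 3 -> [&& a != b, a != c & b != c].
Proof.
rewrite set3E cardsU1 cards2 in_set2.
by case: (a == b); case: (a == c); case: (b == c).
Qed.

Lemma in3 (T : finType) (x a b c : T) : x \in [set a; b; c] -> [\/ x = a, x = b | x = c].
Proof. by rewrite !inE => /orP[/orP[]|] /eqP ->; [constructor 1|constructor 2|constructor 3]. Qed.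

Lemma memG n x y (a b c : 'I_n) : ([set a; b; c] \in Gc n x y) =
  [&& a != b, a != c, b != c & Ef (bl x y a) (bl x y b) (bl x y c)].
Proof.
apply/idP/idP; last first.
  move=> H; rewrite inE; apply/existsP; exists a; apply/existsP; exists b; apply/existsP; exists c.
  by rewrite eqxx.
rewrite inE => /existsP[a' /existsP[b' /existsP[c' /andP[/eqP Es /and4P[ab ac bc Ef']]]]].
have: #|[set a; b; c]| = 3 by rewrite Es card3.
move/card3_dist => /and3P[ab2 ac2 bc2]; rewrite ab2 ac2 bc2 /=.
have ha : a \in [set a'; b'; c'] by rewrite -Es !inE eqxx.
have hb : b \in [set a'; b'; c'] by rewrite -Es !inE eqxx ?orbT.
have hc : c \in [set a'; b'; c'] by rewrite -Es !inE eqxx ?orbT.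
move: ab2 ac2 bc2 Ef'.
case: (in3 ha) => ->; case: (in3 hb) => ->; case: (in3 hc) => ->; rewrite ?eqxx //;
  move=> _ _ _ H;
  first [ done | by rewrite Ef12 | by rewrite Ef23 | by rewrite Ef12 Ef23
        | by rewrite Ef23 Ef12 | by rewrite Ef12 Ef23 Ef12 | by rewrite Ef23 Ef12 Ef23 ].
Qed.

Lemma Guniform n x y : uniform 3 (Gc n x y).
Proof.
apply/forallP => e; apply/implyP; rewrite inE.
move=> /existsP[a /existsP[b /existsP[c /andP[/eqP -> /and4P[ab ac bc _]]]]].
by rewrite card3.
Qed.

Lemma Gfree n x y : Defs.free (complete 3 4) (Gc n x y).
Proof.
apply/negP => /existsP[f /andP[/injectiveP finj /forallP Hf]].
have key : forall i j k : 'I_4, i != j -> i != k -> j != k ->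
    Ef (bl x y (f i)) (bl x y (f j)) (bl x y (f k)).
  move=> i j k ij ik jk.
  have := Hf [set i; j; k]; rewrite /complete inE card3 // eqxx /=.
  rewrite !imsetU !imset_set1 memG => /and4P[_ _ _ //].
pose o0 := @Ordinal 4 0 isT; pose o1 := @Ordinal 4 1 isT;
pose o2 := @Ordinal 4 2 isT; pose o3 := @Ordinal 4 3 isT.
apply: (@Ef_K4 (bl x y (f o0)) (bl x y (f o1)) (bl x y (f o2)) (bl x y (f o3)));
  by apply: key.
Qed.

Definition cnt3 n (H : hgraph n) : nat :=
  \sum_(a : 'I_n) \sum_(b : 'I_n) \sum_(c : 'I_n) ([set a; b; c] \in H).
Definition I4 n (H : hgraph n) : nat :=
  \sum_(a : 'I_n) \sum_(b : 'I_n) \sum_(c : 'I_n) \sum_(d : 'I_n)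
     [&& c != d, [set a; b; c] \in H & [set a; b; d] \in H].

Lemma sum_mem (T : finType) (e : {set T}) : \sum_(c : T) (c \in e) = #|e|.
Proof. rewrite -sum1_card [RHS]big_mkcond; apply: eq_bigr => i _ /=; by case: (i \in e). Qed.

Lemma card3_le (T : finType) (a b c : T) : #|[set a; b; c]| <= 3.
Proof. rewrite set3E cardsU1 cards2; by case: (_ \notin _); case: (_ != _). Qed.

Lemma single_le (T : finType) (P : pred T) (F : T -> nat) (i : T) : P i -> F i <= \sum_(j | P j) F j.
Proof. move=> Pi; rewrite (bigD1 i) //=; exact: leq_addr. Qed.

Lemma cnt3_le27 n (H : hgraph n) : cnt3 H <= 27 * #|H|.
Proof.
rewrite /cnt3.
apply: (@leq_trans (\sum_(a : 'I_n) \sum_(b : 'I_n) \sum_(c : 'I_n) \sum_(e in H)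
     ((c \in e) * ((b \in e) * ((a \in e) * (#|e| <= 3)))))).
  apply: leq_sum => a _; apply: leq_sum => b _; apply: leq_sum => c _.
  case Hs: ([set a; b; c] \in H) => //.
  apply: (leq_trans _ (single_le _ Hs)).
  by rewrite !inE !eqxx ?orbT card3_le.
under eq_bigr => a _ do under eq_bigr => b _ do rewrite exchange_big /=.
under eq_bigr => a _ do rewrite exchange_big /=.
rewrite exchange_big /=.
apply: (@leq_trans (\sum_(e in H) 27)); last by rewrite sum_nat_const mulnC.
apply: leq_sum => e eH.
have E1 : forall k, \sum_(c : 'I_n) (c \in e) * k = #|e| * k.
  by move=> k; rewrite -big_distrl /= sum_mem.
under eq_bigr => a _ do under eq_bigr => b _ do rewrite E1.
under eq_bigr => a _ do rewrite -big_distrr /= E1.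
rewrite -big_distrr /= -big_distrr /= E1.
case: (leqP #|e| 3) => h /=; last by rewrite !muln0.
by rewrite muln1 (leq_trans (leq_mul h (leq_mul h h))).
Qed.

Lemma cnt3_le6 n (H : hgraph n) : uniform 3 H -> cnt3 H <= 6 * #|H|.
Proof.
move=> /forallP Hu; rewrite /cnt3.
apply: (@leq_trans (\sum_(a : 'I_n) \sum_(b : 'I_n) \sum_(c : 'I_n) \sum_(e in H)
     ((c \in (e :\ a) :\ b) * ((b \in e :\ a) * (a \in e))))).
  apply: leq_sum => a _; apply: leq_sum => b _; apply: leq_sum => c _.
  case Hs: ([set a; b; c] \in H) => //.
  apply: (leq_trans _ (single_le _ Hs)).
  have := Hu [set a; b; c]; rewrite Hs /= => /eqP /card3_dist /and3P[ab ac bc].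
  by rewrite !inE !eqxx ?orbT eq_sym bc eq_sym ac eq_sym ab.
under eq_bigr => a _ do under eq_bigr => b _ do rewrite exchange_big /=.
under eq_bigr => a _ do rewrite exchange_big /=.
rewrite exchange_big /=.
apply: (@leq_trans (\sum_(e in H) 6)); last by rewrite sum_nat_const mulnC.
apply: leq_sum => e eH.
have E1 : forall (A : {set 'I_n}) k, \sum_(c : 'I_n) (c \in A) * k = #|A| * k.
  by move=> A k; rewrite -big_distrl /= sum_mem.
under eq_bigr => a _ do under eq_bigr => b _ do rewrite E1.
have e3 : #|e| = 3 by apply/eqP; have := Hu e; rewrite eH.
apply: (@leq_trans (\sum_(a : 'I_n) \sum_(b : 'I_n) ((b \in e :\ a) * (a \in e)))).
  apply: leq_sum => a _; apply: leq_sum => b _.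
  case ha: (a \in e); rewrite ?muln0 //; case hb: (b \in e :\ a); rewrite ?muln0 //.
  have := cardsD1 a e; rewrite ha e3 => /eqP; rewrite eqSS => /eqP h2.
  have := cardsD1 b (e :\ a); rewrite hb -h2 => /eqP; rewrite eqSS => /eqP <-.
  by [].
under eq_bigr => a _ do rewrite E1.
apply: (@leq_trans (\sum_(a : 'I_n) (a \in e) * 2)); last by rewrite E1 e3.
apply: leq_sum => a _; case ha: (a \in e); rewrite ?muln0 //.
have := cardsD1 a e; rewrite ha e3 => /eqP; rewrite eqSS => /eqP <-.
by rewrite mulnC.
Qed.

Definition Dl n (H H' : hgraph n) : hgraph n := (H :\: H') :|: (H' :\: H).

Lemma sum_const_ord n k : \sum_(d : 'I_n) k = n * k.
Proof. by rewrite sum_nat_const card_ord. Qed.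

Lemma sum4_split n (F G : 'I_n -> 'I_n -> 'I_n -> 'I_n -> nat) :
  \sum_a \sum_b \sum_c \sum_d (F a b c d + G a b c d) =
  \sum_a \sum_b \sum_c \sum_d F a b c d + \sum_a \sum_b \sum_c \sum_d G a b c d.
Proof.
rewrite -big_split; apply: eq_bigr => a _; rewrite -big_split; apply: eq_bigr => b _.
rewrite -big_split; apply: eq_bigr => c _; by rewrite -big_split.
Qed.

Lemma sumY n (K : hgraph n) :
  \sum_(a : 'I_n) \sum_(b : 'I_n) \sum_(c : 'I_n) \sum_(d : 'I_n) ([set a; b; c] \in K : nat)
  = n * cnt3 K.
Proof.
rewrite /cnt3 big_distrr; apply: eq_bigr => a _; rewrite big_distrr; apply: eq_bigr => b _.
rewrite big_distrr; apply: eq_bigr => c _; by rewrite sum_const_ord.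
Qed.

Lemma sumZ n (K : hgraph n) :
  \sum_(a : 'I_n) \sum_(b : 'I_n) \sum_(c : 'I_n) \sum_(d : 'I_n) ([set a; b; d] \in K : nat)
  = n * cnt3 K.
Proof.
rewrite /cnt3 big_distrr; apply: eq_bigr => a _; rewrite big_distrr; apply: eq_bigr => b _.
by rewrite sum_const_ord.
Qed.

Lemma I4_lip n (H H' : hgraph n) : I4 H <= I4 H' + (n * cnt3 (Dl H H') + n * cnt3 (Dl H H')).
Proof.
rewrite -{1}sumY -sumZ -sum4_split -sum4_split /I4.
apply: leq_sum => a _; apply: leq_sum => b _; apply: leq_sum => c _; apply: leq_sum => d _.
rewrite /Dl !inE.
case: (c != d); case: ([set a; b; c] \in H); case: ([set a; b; c] \in H');
  case: ([set a; b; d] \in H); case: ([set a; b; d] \in H'); by [].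
Qed.

Lemma sum4_perm n (s : {perm 'I_n}) (F : 'I_n -> 'I_n -> 'I_n -> 'I_n -> nat) :
  \sum_a \sum_b \sum_c \sum_d F (s a) (s b) (s c) (s d) = \sum_a \sum_b \sum_c \sum_d F a b c d.
Proof.
rewrite [RHS](reindex_inj (@perm_inj _ s)); apply: eq_bigr => a _.
rewrite [RHS](reindex_inj (@perm_inj _ s)); apply: eq_bigr => b _.
rewrite [RHS](reindex_inj (@perm_inj _ s)); apply: eq_bigr => c _.
by rewrite [RHS](reindex_inj (@perm_inj _ s)).
Qed.

Lemma mem_relabel n (s : {perm 'I_n}) (X : hgraph n) (a b c : 'I_n) :
  ([set s a; s b; s c] \in relabel s X) = ([set a; b; c] \in X).
Proof.
have -> : [set s a; s b; s c] = [set s x | x in [set a; b; c]] by rewrite !imsetU !imset_set1.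
rewrite /relabel; apply: mem_imset; exact: imset_inj (@perm_inj _ s).
Qed.

Lemma I4_relabel n (s : {perm 'I_n}) (X : hgraph n) : I4 (relabel s X) = I4 X.
Proof.
rewrite /I4 -(sum4_perm s); apply: eq_bigr => a _; apply: eq_bigr => b _.
apply: eq_bigr => c _; apply: eq_bigr => d _.
by rewrite !mem_relabel (inj_eq (@perm_inj _ s)).
Qed.

Definition sz (x y b : nat) := if b < 3 then x else y.

Lemma fiber_gen x y k (F : nat -> nat) : 0 < x + y ->
  \sum_(0 <= v < k * (x + y)) F (bl x y v) = \sum_(0 <= q < k) (x * F q + y * F (3 + q)).
Proof.
move=> hxy; elim: k => [|k IH]; first by rewrite mul0n !big_geq.
rewrite big_nat_recr //= -IH mulSn addnC.
rewrite (@big_cat_nat _ _ _ (k * (x + y))) //=; last by rewrite leq_addr.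
congr (_ + _).
rewrite (@big_cat_nat _ _ _ (k * (x + y) + x)); [| by rewrite leq_addr | by rewrite leq_add2l leq_addr].
rewrite -{1}(add0n (k * (x + y))) big_addn addKn.
rewrite -{1}(add0n (k * (x + y) + x)) big_addn.
have -> : k * (x + y) + (x + y) - (k * (x + y) + x) = y by lia.
have h1 : forall i, i < x -> bl x y (i + k * (x + y)) = k.
  move=> i hi; rewrite /bl [i + _]addnC modnMDl (modn_small (leq_trans hi (leq_addr _ _))) hi.
  by rewrite divnMDl // divn_small ?addn0 // (leq_trans hi (leq_addr _ _)).
have h2 : forall i, i < y -> bl x y (i + (k * (x + y) + x)) = 3 + k.
  move=> i hi; have hi2 : x + i < x + y by rewrite ltn_add2l.
  rewrite /bl (_ : i + (k * (x + y) + x) = k * (x + y) + (x + i)); last lia.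
  rewrite modnMDl (modn_small hi2) ltnNge leq_addr /=.
  by rewrite divnMDl // (divn_small hi2) addn0.
rewrite (@eq_big_nat _ _ _ 0 x _ (fun _ => F k)); last by move=> i /andP[_ hi]; rewrite h1.
rewrite (@eq_big_nat _ _ _ 0 y _ (fun _ => F (3 + k))); last by move=> i /andP[_ hi]; rewrite h2.
by rewrite !sum_nat_const_nat !subn0.
Qed.

Lemma fiber n x y (Hn : n = 3 * (x + y)) (F : nat -> nat) :
  \sum_(v < n) F (bl x y v) = \sum_(0 <= b < 6) sz x y b * F b.
Proof.
case: (posnP (x + y)) => hxy.
  have hn : n = 0 by lia.
  rewrite hn big_ord0; have [-> ->] : x = 0 /\ y = 0 by lia.
  by rewrite unlock /= /sz /=.
rewrite -(big_mkord xpredT (fun v => F (bl x y v))) Hn fiber_gen //.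
rewrite unlock /= /sz /=; ring.
Qed.

Lemma poly3 x y : \sum_(0 <= a < 6) sz x y a * (\sum_(0 <= b < 6) sz x y b * (\sum_(0 <= c < 6) sz x y c * Ef a b c)) = 15 * (x + y) ^ 3.
Proof. rewrite unlock /= /Ef /E /D /sz /=. ring. Qed.
Lemma poly4 x y : \sum_(0 <= a < 6) sz x y a * (\sum_(0 <= b < 6) sz x y b * (\sum_(0 <= c < 6) sz x y c * (\sum_(0 <= d < 6) sz x y d * (Ef a b c && Ef a b d)))) + 12 * x^2 * y^2 = 27 * (x + y) ^ 4.
Proof. rewrite unlock /= /Ef /E /D /sz /=. ring. Qed.

Lemma Q3 n x y (Hn : n = 3 * (x + y)) :
  \sum_(a : 'I_n) \sum_(b : 'I_n) \sum_(c : 'I_n) (Ef (bl x y a) (bl x y b) (bl x y c) : nat) = 15 * (x + y) ^ 3.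
Proof.
under eq_bigr => a _ do under eq_bigr => b _ do rewrite (fiber Hn (fun r => (Ef (bl x y a) (bl x y b) r : nat))).
under eq_bigr => a _ do rewrite (fiber Hn (fun q => \sum_(0 <= r < 6) sz x y r * (Ef (bl x y a) q r : nat))).
rewrite (fiber Hn (fun p => \sum_(0 <= q < 6) sz x y q * \sum_(0 <= r < 6) sz x y r * (Ef p q r : nat))).
exact: poly3.
Qed.

Lemma Q4 n x y (Hn : n = 3 * (x + y)) :
  \sum_(a : 'I_n) \sum_(b : 'I_n) \sum_(c : 'I_n) \sum_(d : 'I_n)
    (Ef (bl x y a) (bl x y b) (bl x y c) && Ef (bl x y a) (bl x y b) (bl x y d) : nat)
  + 12 * x^2 * y^2 = 27 * (x + y) ^ 4.
Proof.
under eq_bigr => a _ do under eq_bigr => b _ do under eq_bigr => c _ do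
  rewrite (fiber Hn (fun s => (Ef (bl x y a) (bl x y b) (bl x y c) && Ef (bl x y a) (bl x y b) s : nat))).
under eq_bigr => a _ do under eq_bigr => b _ do
  rewrite (fiber Hn (fun r => \sum_(0 <= s < 6) sz x y s * (Ef (bl x y a) (bl x y b) r && Ef (bl x y a) (bl x y b) s : nat))).
under eq_bigr => a _ do
  rewrite (fiber Hn (fun q => \sum_(0 <= r < 6) sz x y r * \sum_(0 <= s < 6) sz x y s * (Ef (bl x y a) q r && Ef (bl x y a) q s : nat))).
rewrite (fiber Hn (fun p => \sum_(0 <= q < 6) sz x y q * \sum_(0 <= r < 6) sz x y r * \sum_(0 <= s < 6) sz x y s * (Ef p q r && Ef p q s : nat))).
exact: poly4.
Qed.

Lemma sum_eq1 n (u : 'I_n) : \sum_(v : 'I_n) (u == v : nat) = 1.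
Proof.
have := sum_mem [set u]; rewrite cards1 => <-; apply: eq_bigr => v _; by rewrite inE eq_sym.
Qed.

Lemma sum3_ab n : \sum_(a : 'I_n) \sum_(b : 'I_n) \sum_(c : 'I_n) (a == b : nat) = n ^ 2.
Proof.
under eq_bigr => a _ do under eq_bigr => b _ do rewrite sum_const_ord.
under eq_bigr => a _ do rewrite -big_distrr /= sum_eq1.
by rewrite sum_const_ord; lia.
Qed.
Lemma sum3_ac n : \sum_(a : 'I_n) \sum_(b : 'I_n) \sum_(c : 'I_n) (a == c : nat) = n ^ 2.
Proof.
under eq_bigr => a _ do under eq_bigr => b _ do rewrite sum_eq1.
under eq_bigr => a _ do rewrite sum_const_ord.
by rewrite sum_const_ord; lia.
Qed.
Lemma sum3_bc n : \sum_(a : 'I_n) \sum_(b : 'I_n) \sum_(c : 'I_n) (b == c : nat) = n ^ 2.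
Proof.
under eq_bigr => a _ do under eq_bigr => b _ do rewrite sum_eq1.
under eq_bigr => a _ do rewrite sum_const_ord.
by rewrite sum_const_ord; lia.
Qed.

Lemma sum3_split n (F G : 'I_n -> 'I_n -> 'I_n -> nat) :
  \sum_a \sum_b \sum_c (F a b c + G a b c) = \sum_a \sum_b \sum_c F a b c + \sum_a \sum_b \sum_c G a b c.
Proof.
rewrite -big_split; apply: eq_bigr => a _; rewrite -big_split; apply: eq_bigr => b _.
by rewrite -big_split.
Qed.

Lemma cnt3G n x y (Hn : n = 3 * (x + y)) : 15 * (x + y) ^ 3 <= cnt3 (Gc n x y) + 3 * n ^ 2.
Proof.
rewrite -(Q3 Hn).
have -> : 3 * n ^ 2 = n ^ 2 + (n ^ 2 + n ^ 2) by lia.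
rewrite -{1}sum3_ab -{1}sum3_ac -sum3_bc -!sum3_split /cnt3.
apply: leq_sum => a _; apply: leq_sum => b _; apply: leq_sum => c _.
rewrite memG.
case: (a == b); case: (a == c); case: (b == c); case: Ef; by [].
Qed.

Lemma sum4_ab n : \sum_(a : 'I_n) \sum_(b : 'I_n) \sum_(c : 'I_n) \sum_(d : 'I_n) (a == b : nat) = n ^ 3.
Proof.
under eq_bigr => a _ do under eq_bigr => b _ do under eq_bigr => c _ do rewrite sum_const_ord.
under eq_bigr => a _ do under eq_bigr => b _ do rewrite sum_const_ord.
under eq_bigr => a _ do rewrite -big_distrr /= -big_distrr /= sum_eq1.
rewrite sum_const_ord; lia.
Qed.
Lemma sum4_ac n : \sum_(a : 'I_n) \sum_(b : 'I_n) \sum_(c : 'I_n) \sum_(d : 'I_n) (a == c : nat) = n ^ 3.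
Proof.
under eq_bigr => a _ do under eq_bigr => b _ do under eq_bigr => c _ do rewrite sum_const_ord.
under eq_bigr => a _ do under eq_bigr => b _ do rewrite -big_distrr /= sum_eq1.
under eq_bigr => a _ do rewrite sum_const_ord.
rewrite sum_const_ord; lia.
Qed.
Lemma sum4_bc n : \sum_(a : 'I_n) \sum_(b : 'I_n) \sum_(c : 'I_n) \sum_(d : 'I_n) (b == c : nat) = n ^ 3.
Proof.
under eq_bigr => a _ do under eq_bigr => b _ do under eq_bigr => c _ do rewrite sum_const_ord.
under eq_bigr => a _ do under eq_bigr => b _ do rewrite -big_distrr /= sum_eq1.
under eq_bigr => a _ do rewrite sum_const_ord.
rewrite sum_const_ord; lia.
Qed.
Lemma sum4_ad n : \sum_(a : 'I_n) \sum_(b : 'I_n) \sum_(c : 'I_n) \sum_(d : 'I_n) (a == d : nat) = n ^ 3.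
Proof.
under eq_bigr => a _ do under eq_bigr => b _ do under eq_bigr => c _ do rewrite sum_eq1.
under eq_bigr => a _ do under eq_bigr => b _ do rewrite sum_const_ord.
under eq_bigr => a _ do rewrite sum_const_ord.
rewrite sum_const_ord; lia.
Qed.
Lemma sum4_bd n : \sum_(a : 'I_n) \sum_(b : 'I_n) \sum_(c : 'I_n) \sum_(d : 'I_n) (b == d : nat) = n ^ 3.
Proof.
under eq_bigr => a _ do under eq_bigr => b _ do under eq_bigr => c _ do rewrite sum_eq1.
under eq_bigr => a _ do under eq_bigr => b _ do rewrite sum_const_ord.
under eq_bigr => a _ do rewrite sum_const_ord.
rewrite sum_const_ord; lia.
Qed.
Lemma sum4_cd n : \sum_(a : 'I_n) \sum_(b : 'I_n) \sum_(c : 'I_n) \sum_(d : 'I_n) (c == d : nat) = n ^ 3.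
Proof.
under eq_bigr => a _ do under eq_bigr => b _ do under eq_bigr => c _ do rewrite sum_eq1.
under eq_bigr => a _ do under eq_bigr => b _ do rewrite sum_const_ord.
under eq_bigr => a _ do rewrite sum_const_ord.
rewrite sum_const_ord; lia.
Qed.

Lemma I4G_le n x y : I4 (Gc n x y) <= \sum_(a : 'I_n) \sum_(b : 'I_n) \sum_(c : 'I_n) \sum_(d : 'I_n)
    (Ef (bl x y a) (bl x y b) (bl x y c) && Ef (bl x y a) (bl x y b) (bl x y d) : nat).
Proof.
apply: leq_sum => a _; apply: leq_sum => b _; apply: leq_sum => c _; apply: leq_sum => d _.
rewrite !memG; case: (c != d); case: (a != b); case: (a != c); case: (b != c); case: (a != d); case: (b != d);
  case: Ef; case: Ef; by [].
Qed.

Lemma I4G_ge n x y : \sum_(a : 'I_n) \sum_(b : 'I_n) \sum_(c : 'I_n) \sum_(d : 'I_n)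
    (Ef (bl x y a) (bl x y b) (bl x y c) && Ef (bl x y a) (bl x y b) (bl x y d) : nat)
   <= I4 (Gc n x y) + 6 * n ^ 3.
Proof.
have -> : 6 * n ^ 3 = n ^ 3 + (n ^ 3 + (n ^ 3 + (n ^ 3 + (n ^ 3 + n ^ 3)))) by lia.
rewrite -{1}sum4_ab -{1}sum4_ac -{1}sum4_bc -{1}sum4_ad -{1}sum4_bd -sum4_cd -!sum4_split /I4.
apply: leq_sum => a _; apply: leq_sum => b _; apply: leq_sum => c _; apply: leq_sum => d _.
rewrite !memG.
case: (a == b); case: (a == c); case: (b == c); case: (a == d); case: (b == d); case: (c == d);
  case: Ef; case: Ef; by [].
Qed.
Lemma fmono M a b : 0 < a -> a < b -> b <= M -> a * (2 * M - a) + 1 <= b * (2 * M - b).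
Proof.
move=> h0 hab hbM.
have -> : 2 * M - a = (2 * M - b) + (b - a) by lia.
set c := 2 * M - b. have hc : b <= c by lia. set d := b - a. have hd : 0 < d by lia.
have -> : b = a + d by lia.
rewrite mulnDr mulnDl. 
have : a * d + 1 <= d * c. 
  have : a * d < b * d by rewrite ltn_pmul2r.
  have : b * d <= c * d by rewrite leq_pmul2r.
  lia.
lia.
Qed.
Lemma core (M m K n P Q Ij Ik IX dj dk s xj yj xk yk : nat) :
  K = 139968 * M ^ 4 -> n = 6 * M * m -> 1296 * M ^ 3 < m -> 0 < M ->
  Ij <= IX + 54 * n * dj -> IX <= Ik + 54 * n * dk ->
  K * dj <= n ^ 3 -> K * dk <= n ^ 3 ->
  P + 12 * (xj ^ 2 * yj ^ 2) = 27 * s ^ 4 -> P <= Ij + 6 * n ^ 3 ->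
  Q + 12 * (xk ^ 2 * yk ^ 2) = 27 * s ^ 4 -> Ik <= Q ->
  xj * yj + m ^ 2 <= xk * yk -> False.
Proof.
move=> hK hn hm hM h1 h2 h3 h4 h5 h6 h7 h8 h9.
have hsq : (xj ^ 2 * yj ^ 2) + m ^ 4 <= xk ^ 2 * yk ^ 2.
  have := leq_mul h9 h9.
  rewrite -!expnMn (_ : m ^ 4 = (m ^ 2) ^ 2); last by rewrite -expnM.
  move: (xj * yj) (m ^ 2) (xk * yk) => u v w h.
  apply: leq_trans h; rewrite !expnS !expn0 !muln1; nia.
move: hsq h5 h7; move: (xj ^ 2 * yj ^ 2) (xk ^ 2 * yk ^ 2) => A B hAB h5 h7.
move: h1 h2 h3 h4 h6 h8.
have e4 : 108 * n ^ 4 = K * m ^ 4 by rewrite hK hn; ring.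
have e5 : 6 * K * n ^ 3 = K * m ^ 3 * (1296 * M ^ 3) by rewrite hn; ring.
have e6 : 54 * n * (2 * n ^ 3) = 108 * n ^ 4 by ring.
move=> h1 h2 h3 h4 h6 h8.
have e1 : 12 * m ^ 4 <= 54 * n * (dj + dk) + 6 * n ^ 3.
  rewrite mulnDr; move: h1 h2 h6 h8 h5 h7 hAB; move: (54 * n * dj) (54 * n * dk) (n ^ 3) (m ^ 4) (s ^ 4).
  move=> *; lia.
have e2 : K * (12 * m ^ 4) <= 54 * n * (K * dj + K * dk) + 6 * K * n ^ 3.
  have := leq_mul (leqnn K) e1.
  by have -> : K * (54 * n * (dj + dk) + 6 * n ^ 3) = 54 * n * (K * dj + K * dk) + 6 * K * n ^ 3 by ring.
have e3 : 54 * n * (K * dj + K * dk) <= 54 * n * (2 * n ^ 3).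
  apply: leq_mul => //; lia.
rewrite e6 e4 in e3. rewrite e5 in e2.
have hM4 : 0 < M ^ 4 by rewrite expn_gt0 hM.
have hm3 : 0 < m ^ 3 by rewrite expn_gt0; apply/orP; left; lia.
have Kp : 0 < K * m ^ 3 by rewrite hK; exact: (leq_mul (leq_mul (isT : 0 < 139968) hM4) hm3).
have e7 : K * (12 * m ^ 4) = K * m ^ 4 + K * m ^ 3 * (11 * m) by ring.
rewrite e7 in e2.
have : K * m ^ 3 * (11 * m) <= K * m ^ 3 * (1296 * M ^ 3).
  move: e2 e3; move: (K * m ^ 4) (K * m ^ 3 * (11 * m)) (K * m ^ 3 * (1296 * M ^ 3)) (54 * n * (K * dj + K * dk)).
  move=> *; lia.
rewrite leq_pmul2l // => h; lia.
Qed.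

From Stdlib Require Import Reals.
From Stdlib Require Import Lra IndefiniteDescription.
From mathcomp Require Import ssrnat.

Lemma INRD m n : INR (m + n) = (INR m + INR n)%R.
Proof. exact: plus_INR. Qed.
Lemma INRM m n : INR (m * n) = (INR m * INR n)%R.
Proof. exact: mult_INR. Qed.
Lemma INRX m k : INR (m ^ k) = (INR m ^ k)%R.
Proof. elim: k => [|k IH]; first by rewrite expn0. by rewrite expnS INRM IH /=. Qed.

Lemma INR_leq m n : (m <= n)%N -> (INR m <= INR n)%R.
Proof. by move/leP; apply: le_INR. Qed.
Lemma INR_leq_inv m n : (INR m <= INR n)%R -> (m <= n)%N.
Proof. by move/INR_le/leP. Qed.

Lemma INR6 : INR 6 = 6%R. Proof. simpl; lra. Qed.
Lemma INR3 : INR 3 = 3%R. Proof. simpl; lra. Qed.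
Lemma INR5 : INR 5 = 5%R. Proof. simpl; lra. Qed.
Lemma INR27 : INR 27 = 27%R. Proof. rewrite INR_IZR_INZ; simpl; lra. Qed.
Lemma INR54 : INR 54 = 54%R. Proof. rewrite INR_IZR_INZ; simpl; lra. Qed.

Lemma binC3 n : (3 <= n)%N -> ('C(n, 3) * 6 = n * (n - 1) * (n - 2))%N.
Proof.
move=> hn; have := bin_ffact n 3; rewrite (_ : 3`! = 6) // => ->.
rewrite !ffactnS ffactn0 muln1 mulnA; congr (_ * _ * _); lia.
Qed.

Lemma near_ext (eps : R) (Heps : (eps > 0)%R)
  (Hlim : turan_density_is 3 (complete 3 4) (5 / 9)%R) :
  exists N : nat, forall n G : nat, (N <= n)%N -> (5 * n ^ 3 <= 54 * G + 27 * n ^ 2)%N ->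
    (INR G > (1 - eps) * INR (Defs.ex 3 (complete 3 4) n))%R.
Proof.
set e := Rmin eps (1/2).
have he0 : (0 < e)%R by apply: Rmin_glb_lt; lra.
have he1 : (e <= eps)%R by apply: Rmin_l.
have he2 : (e <= 1/2)%R by apply: Rmin_r.
have [N1 HN1] := Hlim (e / 4)%R ltac:(lra).
have [N2 [HN2 HN2p]] := archimed_cor1 (e / 12)%R ltac:(lra).
exists (N1 + N2 + 3)%N => n G hn hG.
have hn1 : (n >= N1)%coq_nat by apply/leP; lia.
have := HN1 n hn1; rewrite /Rdist => /Rabs_def2 [hu _].
set w := INR (Defs.ex 3 (complete 3 4) n) in hu *.
set c := INR 'C(n, 3) in hu *.
set N := INR n.
have hC : ('C(n, 3) * 6 = n * (n - 1) * (n - 2))%N by apply: binC3; lia.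
have hc1 : (6 * c <= N ^ 3)%R.
  have : ('C(n, 3) * 6 <= n ^ 3)%N by rewrite hC (_ : n ^ 3 = n * n * n); [apply: leq_mul; [apply: leq_mul|]; try apply: leq_subr | rewrite !expnS expn0; lia].
  move/INR_leq; rewrite INRM /N INRX /c; rewrite ?INR6 ?INR3 ?INR5 ?INR54 ?INR27; nra.
have hc2 : (N ^ 3 <= 6 * c + 3 * N ^ 2)%R.
  have : (n ^ 3 <= 'C(n, 3) * 6 + 3 * n ^ 2)%N by rewrite hC; nia.
  move/INR_leq; rewrite INRD !INRM ?INRX /c /N; rewrite ?INR6 ?INR3 ?INR5 ?INR54 ?INR27; nra.
have hcpos : (0 < c)%R.
  apply: (lt_INR 0); apply/ltP; rewrite bin_gt0; lia.
have hw : (w < (5/9 + e/4) * c)%R.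
  have : (w / c < 5/9 + e/4)%R by lra.
  move=> h; apply: (Rmult_lt_reg_r (/ c)); first by apply: Rinv_0_lt_compat.
  rewrite Rmult_assoc Rinv_r; [|lra]. lra.
have hw0 : (0 <= w)%R by apply: pos_INR.
have hGr : (5 * N ^ 3 <= 54 * INR G + 27 * N ^ 2)%R.
  move/INR_leq: hG; rewrite INRD !INRM ?INRX; rewrite ?INR6 ?INR3 ?INR5 ?INR54 ?INR27 /N; nra.
have hN : (INR N2 + 3 <= N)%R.
  have : (N2 + 3 <= n)%N by lia.
  move/INR_leq; rewrite INRD; rewrite ?INR6 ?INR3 ?INR5 ?INR54 ?INR27 /N; nra.
have hN2 : (12 < e * INR N2)%R.
  have hp : (0 < INR N2)%R by apply: (lt_INR 0).
  have := Rmult_lt_compat_l (INR N2) _ _ hp HN2.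
  rewrite Rinv_r; [|lra]. lra.
have hNe : (12 < e * (N - 3))%R by nra.
have hNp : (0 < N)%R by have := pos_INR N2; lra.
have s1 : ((1 - eps) * w <= (1 - e) * w)%R by nra.
have s2 : ((1 - e) * w <= (5/9 - e/4) * c)%R by nra.
have s3 : (e / 24 * (N ^ 3 - 3 * N ^ 2) <= e / 4 * c)%R by nra.
have s4 : (N ^ 2 / 2 < e / 24 * (N ^ 3 - 3 * N ^ 2))%R.
  have : (N ^ 3 - 3 * N ^ 2 = N ^ 2 * (N - 3))%R by ring.
  move=> ->; have hN2p : (0 < N ^ 2)%R by nra. nra.
nra.
Qed.

Lemma Gcard_le n x y : #|Gc n x y| <= n ^ 3.
Proof.
apply: (@leq_trans #|[set [set u.1.1; u.1.2; u.2] | u in [set: 'I_n * 'I_n * 'I_n]]|).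
  apply: subset_leq_card; apply/subsetP => e; rewrite inE.
  move=> /existsP[a /existsP[b /existsP[c /andP[/eqP -> _]]]].
  by apply/imsetP; exists (a, b, c); rewrite ?inE.
apply: (leq_trans (leq_imset_card _ _)).
by rewrite cardsT !card_prod !card_ord expnS expnS expn1 mulnA.
Qed.

Lemma lip_aux n c d : c <= 27 * d -> n * c + n * c <= 54 * n * d.
Proof. move=> h; have := leq_mul (leqnn n) h; lia. Qed.

Lemma DlC n (A B : hgraph n) : #|Dl A B| = #|Dl B A|.
Proof. by rewrite /Dl setUC. Qed.

Theorem proposition1p10 :
  (forall l : nat, (4 <= l)%N ->
     turan_density_is 3 (complete 3 l) (1 - (2 / (INR l - 1)) ^ 2)%R) ->
  stability_number_infinite 3 (complete 3 4).
Proof.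
move=> Hyp t t1 [m0 [Hs [_ Hst]]].
have Hlim : turan_density_is 3 (complete 3 4) (5 / 9)%R.
  have := Hyp 4 isT.
  have -> : (1 - (2 / (INR 4 - 1)) ^ 2 = 5 / 9)%R.
    rewrite (_ : INR 4 = 4%R); last by simpl; lra.
    field.
  done.
pose M := t.+1.
pose K := (139968 * M ^ 4)%N.
have Kp : (0 < K)%N by rewrite /K muln_gt0 expn_gt0.
have KpR : (0 < INR K)%R by apply: (lt_INR 0); apply/ltP.
have [eps [n0 [Heps Hn]]] := Hst (/ INR K)%R (Rinv_0_lt_compat _ KpR).
have [N1 HN1] := near_ext Heps Hlim.
pose m := (n0 + m0 + N1 + 1296 * M ^ 3 + 1)%N.
pose n := (6 * M * m)%N.
pose s := (2 * M * m)%N.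
pose x (j : 'I_M) := (j.+1 * m)%N.
pose y (j : 'I_M) := ((2 * M - j.+1) * m)%N.
have hs : forall j : 'I_M, x j + y j = s.
  move=> j; rewrite /x /y /s -mulnDl; congr (_ * _); have := ltn_ord j; lia.
have hn : forall j : 'I_M, n = 3 * (x j + y j).
  by move=> j; rewrite hs /n /s; lia.
have hmn : (m <= n)%N by rewrite /n leq_pmull // muln_gt0.
have Hmem : forall j : 'I_M, exists i : 'I_t, exists sg : {perm 'I_n},
   (INR (edit_dist (Gc n (x j) (y j)) (relabel sg (Hs n i))) <= / INR K * INR #|Gc n (x j) (y j)|)%R.
  move=> j; apply: Hn.
  - by apply: leq_trans hmn; rewrite /m; lia.
  - by apply: leq_trans hmn; rewrite /m; lia.
  - exact: Guniform.
  - exact: Gfree.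
  apply: HN1; first by apply: leq_trans hmn; rewrite /m; lia.
  have h1 := cnt3G (hn j).
  have h2 := cnt3_le6 (Guniform n (x j) (y j)).
  move: h1 h2; rewrite (hn j).
  move: (cnt3 (Gc _ (x j) (y j))) (#|Gc _ (x j) (y j)|) => C G h1 h2.
  have e1 : (3 * (x j + y j)) ^ 3 = 27 * (x j + y j) ^ 3 by rewrite expnMn.
  rewrite e1; move: h1; move: ((x j + y j) ^ 3) ((3 * (x j + y j)) ^ 2) => A B h1.
  lia.
pose g := fun j => proj1_sig (constructive_indefinite_description _ (Hmem j)).
have Hg : forall j, exists sg : {perm 'I_n},
   (INR (edit_dist (Gc n (x j) (y j)) (relabel sg (Hs n (g j)))) <= / INR K * INR #|Gc n (x j) (y j)|)%R.
  by move=> j; exact: (proj2_sig (constructive_indefinite_description _ (Hmem j))).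
have main : forall j k : 'I_M, (j < k)%N -> g j = g k -> False.
  move=> j k jk gjk.
  have [sj Hj] := Hg j; have [sk Hk] := Hg k.
  rewrite gjk in Hj.
  set X := Hs n (g k) in Hj Hk.
  have toNat : forall xx yy d, (INR d <= / INR K * INR #|Gc n xx yy|)%R -> (K * d <= n ^ 3)%N.
    move=> xx yy d hd; apply: (leq_trans _ (Gcard_le n xx yy)).
    apply: INR_leq_inv; rewrite INRM.
    have := Rmult_le_compat_l (INR K) _ _ (Rlt_le _ _ KpR) hd.
    rewrite -Rmult_assoc Rinv_r; last by lra.
    by rewrite Rmult_1_l.
  pose dj := edit_dist (Gc n (x j) (y j)) (relabel sj X).
  pose dk := edit_dist (Gc n (x k) (y k)) (relabel sk X).
  have h3 : (K * dj <= n ^ 3)%N := toNat _ _ _ Hj.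
  have h4 : (K * dk <= n ^ 3)%N := toNat _ _ _ Hk.
  have h1 : (I4 (Gc n (x j) (y j)) <= I4 X + 54 * n * dj)%N.
    have := I4_lip (Gc n (x j) (y j)) (relabel sj X).
    rewrite I4_relabel => h; apply: (leq_trans h); rewrite leq_add2l.
    exact: lip_aux (cnt3_le27 (Dl (Gc n (x j) (y j)) (relabel sj X))).
  have h2 : (I4 X <= I4 (Gc n (x k) (y k)) + 54 * n * dk)%N.
    have := I4_lip (relabel sk X) (Gc n (x k) (y k)).
    rewrite I4_relabel => h; apply: (leq_trans h); rewrite leq_add2l.
    have := cnt3_le27 (Dl (relabel sk X) (Gc n (x k) (y k))); rewrite DlC.
    exact: lip_aux.
  have h5 := Q4 (hn j); rewrite -mulnA hs in h5.
  have h6 := I4G_ge n (x j) (y j).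
  have h7 := Q4 (hn k); rewrite -mulnA hs in h7.
  have h8 := I4G_le n (x k) (y k).
  have h9 : (x j * y j + m ^ 2 <= x k * y k)%N.
    have hf := @fmono M j.+1 k.+1 isT jk (ltn_ord k).
    have ex2 : forall a b : nat, (a * m * (b * m) = a * b * m ^ 2)%N by move=> a b; rewrite mulnACA mulnn.
    rewrite /x /y !ex2.
    have := leq_mul hf (leqnn (m ^ 2)); by rewrite mulnDl mul1n.
  apply: (core (M := M) (m := m) (K := K) (n := n) (s := s) erefl erefl _ isT h1 h2 h3 h4 h5 h6 h7 h8 h9).
  by rewrite /m; lia.
have ninj : ~~ injectiveb g.
  apply/negP => /injectiveP ginj; have := leq_card g ginj; by rewrite !card_ord ltnn.
case/injectivePn: ninj => j [k jk gjk].
case: (ltngtP j k) => h.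
- exact: main j k h gjk.
- exact: main k j h (esym gjk).
- by move: jk; rewrite (val_inj h) eqxx.
Qed.
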